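(* Let $\Gamma$ be a finite simple undirected graph with at least one edge, whose automorphism group $G$ acts primitively on the vertex set, and let $r$ be the chromatic number of $\Gamma$. Then $\Gamma$ does not contain a subgraph isomorphic to the complete graph on $r+1$ vertices with one edge removed.
   Context: A permutation group is primitive if it is transitive and preserves no equivalence relation other than equality and the universal relation. *)

(* Defs.v *)
From mathcomp Require Import all_boot all_fingroup.
Set Implicit Arguments.
Unset Strict Implicit.
Unset Printing Implicit Defensive.

Definition simple_graph (V : finType) (e : rel V) : Prop :=
  symmetric e /\ irreflexive e.

Definition graph_aut (V : finType) (e : rel V) (g : {perm V}) : Prop :=
  forall x y, e (g x) (g y) = e x y.

Definition aut_primitive (V : finType) (e : rel V) : Prop :=
  (forall x y : V, exists g : {perm V}, graph_aut e g /\ g x = y) /\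
  (forall R : rel V, equivalence_rel R ->
     (forall g : {perm V}, graph_aut e g -> forall x y, R x y -> R (g x) (g y)) ->
     (forall x y, R x y = (x == y)) \/ (forall x y, R x y = true)).

Definition colourable (V : finType) (e : rel V) (k : nat) : Prop :=
  exists c : V -> 'I_k, forall x y, e x y -> c x != c y.

Definition chromatic_number (V : finType) (e : rel V) (r : nat) : Prop :=
  colourable e r /\ forall k, colourable e k -> r <= k.

(* The graph contains a (not necessarily induced) subgraph isomorphic to
   K_n minus one edge: here the missing edge is {0, 1} of 'I_n. *)
Definition contains_Kn_minus_edge (V : finType) (e : rel V) (n : nat) : Prop :=
  exists f : 'I_n -> V, injective f /\
    forall i j : 'I_n, i != j -> ~~ ((i <= 1) && (j <= 1))%N -> e (f i) (f j).

(* Main.v *)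
Require Import Defs.
From mathcomp Require Import all_boot all_fingroup.
Set Implicit Arguments.
Unset Strict Implicit.
Unset Printing Implicit Defensive.

Section S.
Variables (V : finType) (e : rel V) (r : nat).

Definition properb (c : {ffun V -> 'I_r}) : bool :=
  [forall x, forall y, e x y ==> (c x != c y)].

Definition Rc : rel V := fun x y =>
  [forall c : {ffun V -> 'I_r}, properb c ==> (c x == c y)].

Lemma Rc_equiv : equivalence_rel Rc.
Proof.
move=> x y z; split.
  by apply/forallP => c; apply/implyP.
move=> /forallP Hxy; apply/forallP/forallP => H c; apply/implyP => pc;
  have := Hxy c; rewrite pc /= => /eqP E; have := H c; rewrite pc /= => /eqP E2.
  by rewrite -E E2.
by rewrite E E2.
Qed.

Lemma Rc_aut (g : {perm V}) : graph_aut e g -> forall x y, Rc x y -> Rc (g x) (g y).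
Proof.
move=> ga x y /forallP H; apply/forallP => c; apply/implyP => pc.
have := H [ffun z => c (g z)]; rewrite !ffunE => /implyP; apply.
apply/forallP => a; apply/forallP => b; apply/implyP => eab.
rewrite !ffunE; move/forallP: pc => /(_ (g a)) /forallP /(_ (g b)) /implyP; apply.
by rewrite ga.
Qed.
End S.

Theorem lemma8 (V : finType) (e : rel V) (r : nat) :
  simple_graph e ->
  (exists x y, e x y) ->
  aut_primitive e ->
  chromatic_number e r ->
  ~ contains_Kn_minus_edge e r.+1.
Proof.
move=> _ [x0 [y0 exy]] [_ prim] [[c0 pc0] _] [f [finj fe]].
case: r c0 pc0 f finj fe => [|r] c0 pc0 f finj fe; first by case: (c0 x0).
have key : Rc e r.+1 (f ord0) (f (inord 1)).
  apply/forallP => c; apply/implyP => /forallP pc; apply/eqP.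
  apply/eqP/negPn/negP => ne.
  have inj : injective (fun i => c (f i)).
    move=> i j; apply: contra_eq => nij.
    case Hb: ((i <= 1) && (j <= 1))%N.
      move/andP: Hb => [hi hj].
      have hi' : (nat_of_ord i == 0)%N || (nat_of_ord i == 1)%N.
        by move: hi; case: (nat_of_ord i) => [|[|]].
      have hj' : (nat_of_ord j == 0)%N || (nat_of_ord j == 1)%N.
        by move: hj; case: (nat_of_ord j) => [|[|]].
      have E0 : i = ord0 \/ i = inord 1.
        case/orP: hi' => /eqP h; [left|right]; apply/val_inj => //=.
        by rewrite inordK.
      have E1 : j = ord0 \/ j = inord 1.
        case/orP: hj' => /eqP h; [left|right]; apply/val_inj => //=.
        by rewrite inordK.
      move: nij; case: E0 E1 => -> [] ->; rewrite ?eqxx //= => _; first [exact: ne | by rewrite eq_sym].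
    have := implyP (forallP (pc (f i)) (f j)); apply.
    by apply: fe => //; rewrite Hb.
  by have := leq_card _ inj; rewrite !card_ord ltnn.
have Ne : f ord0 != f (inord 1).
  apply/negP => /eqP /finj /(congr1 val) /=; by rewrite inordK.
case: (prim _ (@Rc_equiv V e r.+1) (@Rc_aut V e r.+1)) => H.
  by move: key; rewrite H (negbTE Ne).
have := H x0 y0 => /forallP /(_ [ffun z => c0 z]); rewrite !ffunE.
have -> : properb e [ffun z => c0 z].
  apply/forallP => a; apply/forallP => b; apply/implyP => /pc0; by rewrite !ffunE.
by move/eqP => /= E; move: (pc0 _ _ exy); rewrite E eqxx.
Qed.
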